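(* Let $t\ge 1$ and $n\ge 1$ be integers and let $\mathcal{C}\subseteq\{0,1\}^n$ be a $t$-break-resilient code. For $i\in\{0,1,\ldots,n\}$ let $\mathcal{C}_i$ be the set of codewords of $\mathcal{C}$ of Hamming weight $i$, so that $\mathcal{C}=\mathcal{C}_0\cup\mathcal{C}_1\cup\cdots\cup\mathcal{C}_n$. Then for every $i\in\{1,\ldots,n\}$, the minimum Hamming distance of $\mathcal{C}_i$ is at least $\lceil\frac{t+1}{2}\rceil$ (i.e., any two distinct words of $\mathcal{C}_i$ differ in at least $\lceil\frac{t+1}{2}\rceil$ coordinates).
   Context: Breaking a binary string $\mathbf{x}\in\{0,1\}^n$ at $s\le t$ positions means choosing $s$ cut points between consecutive entries, producing $s+1$ (nonempty) consecutive substrings called fragments; the fragments are oriented (each is read left to right as in $\mathbf{x}$) but are given as an unordered multiset. Two words $\mathbf{x},\mathbf{y}\in\{0,1\}^n$ are $t$-confusable if there exist at most $t$ break positions in $\mathbf{x}$ and at most $t$ break positions in $\mathbf{y}$ that produce the same multiset of fragments. A code $\mathcal{C}\subseteq\{0,1\}^n$ is a $t$-break-resilient code ($t$-BRC) if no two distinct codewords of $\mathcal{C}$ are $t$-confusable, i.e., every codeword can be uniquely recovered from the unordered multiset of at most $t+1$ fragments resulting from any at most $t$ breaks. *)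

(* Defs.v *)
From mathcomp Require Import all_boot.
Set Implicit Arguments. Unset Strict Implicit. Unset Printing Implicit Defensive.

(* A breaking of a word x (as a sequence) at at most t positions:
   a list of nonempty consecutive fragments whose concatenation (in order)
   is x, with at most t+1 fragments (i.e. at most t cut points). *)
Definition breaking (t : nat) (x : seq bool) (fs : seq (seq bool)) : Prop :=
  [/\ flatten fs = x, all (fun f => size f > 0) fs & size fs <= t.+1].

(* x and y are t-confusable: some breaking of x and some breaking of y
   yield the same multiset of (oriented) fragments. *)
Definition confusable (t : nat) (x y : seq bool) : Prop :=
  exists fx fy, [/\ breaking t x fx, breaking t y fy & perm_eq fx fy].

Definition t_BRC (n t : nat) (C : {set n.-tuple bool}) : Prop :=
  forall x y : n.-tuple bool, x \in C -> y \in C -> x != y ->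
    ~ confusable t (val x) (val y).

Definition hweight (n : nat) (x : n.-tuple bool) : nat := count id x.

Definition hdist (n : nat) (x y : n.-tuple bool) : nat :=
  count (fun p => p.1 != p.2) (zip x y).

(* Main.v *)
Require Import Defs.
From mathcomp Require Import all_boot zify.
Definition ag (p : bool * bool) := p.1 == p.2.
Fixpoint cut (s : seq (bool*bool)) : seq (seq (bool*bool)) :=
  match s with
  | [::] => [::]
  | p :: s' =>
    let P := cut s' in
    if ag p then
      match P with
      | (q :: r) :: P' => if ag q then (p :: q :: r) :: P' else [:: p] :: P
      | _ => [:: p] :: P
      end
    else [:: p] :: P
  end.

Lemma cut_flatten s : flatten (cut s) = s.
Proof.
elim: s => [|p s IH] //=.
case: (ag p) => /=; first (move: IH; case: (cut s) => [|[|q r] P'] /= <- //; by case: ifP).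
by rewrite IH.
Qed.

Lemma cut_nonempty s : all (fun r => size r > 0) (cut s).
Proof.
elim: s => [|p s IH] //=.
case: (ag p) => //; move: IH; case: (cut s) => [|[|q r] P'] //=.
by case: ifP.
Qed.

Lemma cut_good s : all (fun r => all ag r || (size r == 1)) (cut s).
Proof.
elim: s => [|p s IH] //=.
case Hp: (ag p) => /=; move: IH; case: (cut s) => [|[|q r] P'] /=; rewrite ?eqxx ?orbT //=.
case Hq: (ag q) => /= /andP[H1 H2]; rewrite /= ?Hp ?Hq ?H2 ?eqxx ?orbT ?andbT //=.
by move: H1; case/orP => [->//|]; case: r.
Qed.

Definition cstep p P : seq (seq (bool*bool)) :=
    if ag p then
      match P with
      | (q :: r) :: P' => if ag q then (p :: q :: r) :: P' else [:: p] :: P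
      | _ => [:: p] :: P
      end
    else [:: p] :: P.

Lemma cut_cons p s : cut (p :: s) = cstep p (cut s).
Proof. by []. Qed.

Lemma cut_head p s : exists r P, cut (p :: s) = (p :: r) :: P.
Proof.
rewrite cut_cons /cstep; case: (ag p); last by exists [::], (cut s).
case: (cut s) => [|[|q r] P']; try by exists [::]; eexists.
by case: (ag q); [exists (q :: r), P' | exists [::]; eexists].
Qed.

Definition hd_ag (s : seq (bool*bool)) := if s is p :: _ then ag p else false.

Lemma cut_size s : size (cut s) <= 2 * count (predC ag) s + hd_ag s.
Proof.
elim: s => [|p s IH] //.
rewrite cut_cons /cstep /=; case Hp: (ag p) => /=; last first.
  by move: IH; case: (hd_ag s) => /=; lia.
move: IH; case: s => [|p' s'] IH; first by [].
have [r [P Hr]] := cut_head p' s'.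
move: IH; rewrite Hr /=; case: (ag p') => /=; lia.
Qed.

Lemma perm_bool (u v : seq bool) : size u = size v -> count id u = count id v -> perm_eq u v.
Proof.
move=> Hs Hc; apply/permP => q.
have E w : count q w = q true * count id w + q false * (size w - count id w).
  elim: w => [|b w IH]; first by rewrite /= !muln0.
  rewrite /= IH; case: b; case: (q true); case: (q false) => /=;
  have := count_size id w; lia.
by rewrite !E Hs Hc.
Qed.

Lemma sing_map (D : seq (seq (bool*bool))) : all (fun r => size r == 1) D ->
  D = map (fun p => [:: p]) (flatten D).
Proof.
elim: D => [|r D IH] //= /andP[H1 H2].
by case: r H1 => [|a [|b r]] //= _; rewrite -IH.
Qed.

Lemma ag_map (r : seq (bool*bool)) : all ag r -> map fst r = map snd r.
Proof. elim: r => [|p r IH] //= /andP[/eqP -> H]; by rewrite IH. Qed.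

Lemma perm_pieces (P : seq (seq (bool*bool))) :
  all (fun r => all ag r || (size r == 1)) P ->
  count (fun p => p.1) (flatten P) = count (fun p => p.2) (flatten P) ->
  perm_eq (map (map fst) P) (map (map snd) P).
Proof.
move=> Hg Hc.
set A := filter (all ag) P; set D := filter (predC (all ag)) P.
have HP : perm_eq P (A ++ D) by rewrite perm_sym perm_filterC.
have HD : all (fun r => size r == 1) D.
  apply/allP => r; rewrite mem_filter /= => /andP[H1 H2].
  by move/allP: Hg => /(_ r H2); rewrite (negbTE H1).
have HA : map (map fst) A = map (map snd) A.
  apply/eq_in_map => r; rewrite mem_filter => /andP[H _]; exact: ag_map.
have HAc : count (fun p => p.1) (flatten A) = count (fun p => p.2) (flatten A).
  apply: eq_in_count => p /flattenP [r]; rewrite mem_filter => /andP[/allP H _] /H.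
  by move/eqP.
have HE : count (fun p => p.1) (flatten D) = count (fun p => p.2) (flatten D).
  move: Hc; rewrite !(permP (perm_flatten HP)) flatten_cat !count_cat HAc; exact: addnI.
apply: (@perm_trans _ (map (map fst) (A ++ D))); first exact: perm_map.
apply: (@perm_trans _ (map (map snd) (A ++ D))); last by rewrite perm_sym; exact: perm_map.
rewrite !map_cat HA perm_cat2l (@sing_map D HD) -!map_comp.
have -> : [seq (map fst \o (fun p => [:: p])) i | i <- flatten D] = map (fun b => [:: b]) (map fst (flatten D)) by rewrite -map_comp.
have -> : [seq (map snd \o (fun p => [:: p])) i | i <- flatten D] = map (fun b => [:: b]) (map snd (flatten D)) by rewrite -map_comp.
apply: perm_map; apply: perm_bool; first by rewrite !size_map.
by rewrite !count_map.
Qed.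

Theorem lemma1 (t n : nat) (C : {set n.-tuple bool}) :
  1 <= t -> 1 <= n -> t_BRC t C ->
  forall i : nat, 1 <= i <= n ->
  forall x y : n.-tuple bool,
    x \in C -> y \in C -> hweight x = i -> hweight y = i -> x != y ->
    (t.+2) %/ 2 <= hdist x y.
Proof.
move=> _ _ Hb i _ x y Hx Hy Hwx Hwy Hxy.
rewrite leqNgt; apply/negP => Hlt.
apply: (Hb x y Hx Hy Hxy).
set s := zip (val x) (val y).
have Hs1 : unzip1 s = val x by rewrite unzip1_zip // !size_tuple.
have Hs2 : unzip2 s = val y by rewrite unzip2_zip // !size_tuple.
have Hd : hdist x y = count (predC ag) s by apply: eq_count.
exists (map (map fst) (cut s)), (map (map snd) (cut s)); split.
- split; first by rewrite -map_flatten cut_flatten.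
  + by rewrite all_map; apply: sub_all (cut_nonempty s) => r /=; rewrite size_map.
  + have := cut_size s; rewrite size_map -Hd.
    have : hd_ag s <= 1 by case: (s) => [|[? ?] ?] //=; case: ag.
    move: Hlt; lia.
- split; first by rewrite -map_flatten cut_flatten.
  + by rewrite all_map; apply: sub_all (cut_nonempty s) => r /=; rewrite size_map.
  + have := cut_size s; rewrite size_map -Hd.
    have : hd_ag s <= 1 by case: (s) => [|[? ?] ?] //=; case: ag.
    move: Hlt; lia.
- apply: perm_pieces; first exact: cut_good.
  rewrite cut_flatten.
  have E1 : count (fun p => p.1) s = count id (unzip1 s) by rewrite count_map.
  have E2 : count (fun p => p.2) s = count id (unzip2 s) by rewrite count_map.
  by rewrite E1 E2 Hs1 Hs2; move: Hwx Hwy; rewrite /hweight => -> ->.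
Qed.
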